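(* For any space $X$, $\mathcal{K}(X) =_T \mathcal{K}(\mathcal{K}(X))$.
   Context: All spaces are Tychonoff. $\mathcal{K}(X)$ is the set of compact subsets of $X$ ordered by inclusion and equipped with the Vietoris topology; $\mathcal{K}(\mathcal{K}(X))$ is the set of compact subsets of the space $\mathcal{K}(X)$, ordered by inclusion. For directed sets $P,Q$, $P \ge_T Q$ means there is a map $\phi:P\to Q$ such that $\phi(C)$ is cofinal in $Q$ for every cofinal $C\subseteq P$; $P =_T Q$ means $P\ge_T Q$ and $Q \ge_T P$. *)

(* Defs.v *)
From HB Require Import structures.
From mathcomp Require Import all_boot all_order all_algebra.
From mathcomp Require Import all_classical all_reals topology.
From mathcomp Require Import Rstruct Rstruct_topology.
Set Implicit Arguments. Unset Strict Implicit. Unset Printing Implicit Defensive.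
Import Order.TTheory GRing.Theory Num.Theory.
Local Open Scope classical_set_scope.

Definition tychonoff_space (X : topologicalType) : Prop :=
  hausdorff_space X /\
  forall (x : X) (B : set X), closed B -> ~ B x ->
    exists f : X -> Rdefinitions.R,
      continuous f /\ f x = 0%R /\ (forall y, B y -> f y = 1%R).

Definition cofinal (P : Type) (le : P -> P -> Prop) (C : set P) : Prop :=
  forall p : P, exists2 c, C c & le p c.

Definition tukey_ge (P Q : Type) (leP : P -> P -> Prop) (leQ : Q -> Q -> Prop)
  : Prop :=
  exists phi : P -> Q, forall C : set P, cofinal leP C -> cofinal leQ (phi @` C).

Definition tukey_eq (P Q : Type) (leP : P -> P -> Prop) (leQ : Q -> Q -> Prop)
  : Prop := tukey_ge leP leQ /\ tukey_ge leQ leP.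

Definition Kspace (X : topologicalType) : Type := {A : set X | compact A}.

Section Vietoris.
Context (X : topologicalType).

HB.instance Definition _ := gen_eqMixin (Kspace X).
HB.instance Definition _ := gen_choiceMixin (Kspace X).
HB.instance Definition _ := isPointed.Build (Kspace X)
  (exist (fun A : set X => compact A) set0 compact0).

Definition vietoris_subbase_index : set (set X * bool) := [set p | open p.1].

Definition vietoris_subbase (p : set X * bool) : set (Kspace X) :=
  if p.2 then [set A | proj1_sig A `<=` p.1]
  else [set A | proj1_sig A `&` p.1 !=set0].

HB.instance Definition _ := @isSubBaseTopological.Build (Kspace X)
  (set X * bool)%type vietoris_subbase_index vietoris_subbase.
End Vietoris.

Definition K_le (X : topologicalType) (A B : Kspace X) : Prop :=
  proj1_sig A `<=` proj1_sig B.

(* Main.v *)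
Require Import Defs.
From HB Require Import structures.
From mathcomp Require Import all_boot all_classical topology.
From mathcomp Require Import finmap.
Local Open Scope classical_set_scope.

Lemma tukey_crit (P Q : Type) (leP : P -> P -> Prop) (leQ : Q -> Q -> Prop) (phi : P -> Q) :
  (forall q, exists p, forall p', leP p p' -> leQ q (phi p')) -> tukey_ge leP leQ.
Proof.
move=> H; exists phi => C CC q; have [p Hp] := H q.
have [c Cc pc] := CC p; exists (phi c); [by exists c | exact: Hp].
Qed.

Lemma vietoris_open (X : topologicalType) (U : set X) (b : bool) : open U ->
  open (vietoris_subbase (U, b)).
Proof.
move=> oU; exists [set vietoris_subbase (U, b)]; last by rewrite bigcup_set1.
move=> A ->; exists [fset (U, b)]%fset; last by rewrite set_fset1 bigcap_set1.
move=> ? /[!inE] /eqP ->; apply/mem_set; exact: oU.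
Qed.

Definition pX {T : topologicalType} (x0 : T) : Type := T.
HB.instance Definition _ (T : topologicalType) (x0 : T) := Topological.on (pX x0).
HB.instance Definition _ (T : topologicalType) (x0 : T) := isPointed.Build (pX x0) x0.

Lemma compact_coverX (T : topologicalType) (A : set T) :
  compact A <-> cover_compact A.
Proof.
case: (pselect (A !=set0)) => [[x0 _]|nA].
  have := @compact_cover (pX x0); move=> /(congr1 (fun f => f A)) E.
  split=> H.
    have H' : @compact (pX x0) A := H; by move: H'; rewrite E.
  have H' : @cover_compact (pX x0) A := H; by move: H'; rewrite -E.
have -> : A = set0 by apply/seteqP; split => // x Ax; apply: nA; exists x.
split=> _; first by move=> I D f _ _; exists fset0 => // x.
exact: compact0.
Qed.

Lemma union_compact (X : topologicalType) (KK : set (Kspace X)) :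
  compact KK -> compact (\bigcup_(A in KK) proj1_sig A).
Proof.
rewrite compact_cover => cK; apply/compact_coverX => I D f fop fcov.
have hA : forall A : Kspace X, exists D' : {fset I},
    KK A -> {subset D' <= D} /\ proj1_sig A `<=` cover [set` D'] f.
  move=> A; case: (pselect (KK A)) => KA; last by exists fset0.
  have /compact_coverX cA := proj2_sig A.
  have [D' sD cov] := cA I D f fop (fun x Ax => fcov x (ex_intro2 _ _ A KA Ax)).
  by exists D'.
pose g A := projT1 (cid (hA A)).
have gP A : KK A -> {subset g A <= D} /\ proj1_sig A `<=` cover [set` g A] f.
  exact: (projT2 (cid (hA A))).
pose V A := cover [set` g A] f.
have covK : KK `<=` cover KK (fun A => vietoris_subbase (V A, true)).
  by move=> B KB; exists B => //; exact: (gP B KB).2.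
have [E sE covE] := cK (Kspace X) KK (fun A => vietoris_subbase (V A, true))
  (fun A KA => @vietoris_open X _ true (bigcup_open (fun i gi => fop i (set_mem ((gP A KA).1 i gi))))) covK.
exists (\bigcup_(A <- E) g A)%fset.
  move=> i /bigfcupP [A /andP [AE _] iA].
  have /set_mem KA := sE A AE.
  exact: (gP A KA).1.
move=> x [B KB Bx].
have [A AE BA] := covE B KB.
have [i gi fxi] := BA x Bx.
exists i => //=.
apply/bigfcupP; exists A => //; rewrite andbT; exact: AE.
Qed.

Lemma hyper_compact (X : topologicalType) (A : Kspace X) :
  compact [set B : Kspace X | proj1_sig B `<=` proj1_sig A].
Proof.
rewrite compact_ultra => F UF FKA.
pose Cl := [set x : X | forall U, open U -> U x ->
  F [set B : Kspace X | proj1_sig B `&` U !=set0]].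
have clCl : closed Cl.
  move=> x clx U oU Ux.
  have [y [Cly Uy]] := clx U (open_nbhs_nbhs (conj oU Ux)).
  exact: Cly U oU Uy.
have cL : compact (proj1_sig A `&` Cl) := compact_closedI (proj2_sig A) clCl.
pose LL : Kspace X := exist _ _ cL.
exists LL; split; first by move=> x [].
move=> W; rewrite nbhsE => -[B [oB BL] BW].
apply: (filterS BW).
change (F B); move: oB => [D1 sD1 eB]; rewrite -eB in BL *. move: BL => [C D1C CL]. apply: (filterS (bigcup_sup D1C)). have [E sE eC] := sD1 C D1C. rewrite -eC in CL *. apply: filter_bigI => i iE. have := CL i iE; have := sE i iE.
case: i iE => U bb _ /set_mem oU; have {}oU : open U := oU.
change (vietoris_subbase (U, bb) LL -> F (vietoris_subbase (U, bb))).
case: bb; rewrite /vietoris_subbase /=; last first.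
  by move=> [x [[Ax Clx] Ux]]; exact: Clx U oU Ux.
move=> LU.
pose R := proj1_sig A `&` ~` U.
have hV x : exists V : set X, R x -> [/\ open V, V x &
    F [set B : Kspace X | ~ (proj1_sig B `&` V !=set0)]].
  case: (pselect (R x)) => [[Ax nUx]|nR]; last by exists set0.
  apply: contrapT => nE; apply: nUx; apply: LU; split => //.
  move=> V oV Vx.
  case: (in_ultra_setVsetC [set B : Kspace X | proj1_sig B `&` V !=set0] UF) => // FC.
  by exfalso; apply: nE; exists V.
pose Vf x := projT1 (cid (hV x)).
have VfP x : R x -> [/\ open (Vf x), Vf x x &
    F [set B : Kspace X | ~ (proj1_sig B `&` Vf x !=set0)]].
  exact: (projT2 (cid (hV x))).
have cR : compact R by apply: compact_closedI (proj2_sig A) (open_closedC oU).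
have /compact_coverX cRc := cR.
have VfO x : R x -> open (Vf x) by case/VfP.
have covR : R `<=` cover R Vf by move=> x Rx; exists x => //; case: (VfP x Rx).
have [E' sE' covE'] := cRc X R Vf VfO covR.
have FG : F (\bigcap_(x in [set` E']) [set B : Kspace X | ~ (proj1_sig B `&` Vf x !=set0)]).
  apply: filter_bigI => x xE; have /set_mem Rx := sE' x xE.
  by case: (VfP x Rx).
apply: filterS (filterI FKA FG).
move=> K [BA BV] y By; apply: contrapT => nUy.
have [x xE Vx] := covE' y (conj (BA y By) nUy).
by apply: (BV x xE); exists y.
Qed.

Theorem mainTheorem5 (X : topologicalType) (hX : tychonoff_space X) :
  tukey_eq (@K_le X) (@K_le (Kspace X)).
Proof.
split.
  apply: (@tukey_crit _ _ (@K_le X) (@K_le (Kspace X)) (fun A : Kspace X => exist _ _ (@hyper_compact X A) : Kspace (Kspace X))).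
  move=> KK; exists (exist _ _ (@union_compact X _ (proj2_sig KK)) : Kspace X).
  move=> A' UA B KKB x Bx; exact: UA x (ex_intro2 _ _ B KKB Bx).
apply: (@tukey_crit _ _ (@K_le (Kspace X)) (@K_le X) (fun KK : Kspace (Kspace X) => exist _ _ (@union_compact X _ (proj2_sig KK)) : Kspace X)).
move=> A; exists (exist _ [set A] (@compact_set1 _ A) : Kspace (Kspace X)).
move=> KK sKK x Ax; exists A => //; exact: sKK A erefl.
Qed.
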